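(* Let $S$ be a Rauzy scheme for a recurrent infinite word $W$, let $l$ be an admissible path in $S$ with $F(l)=u$, and let $u_1$ be a finite word with $uu_1\sqsubseteq W$. Then there is an admissible path $l'$ in $S$ such that $l$ is a prefix of $l'$ and $F(l')$ begins with $uu_1$. Symmetrically, if $u_1u\sqsubseteq W$, there is an admissible path $l'$ such that $l$ is a suffix of $l'$ and $F(l')$ ends with $u_1u$.
   Context: An infinite word $W$ is recurrent if every factor occurs infinitely often. $u\sqsubseteq w$: $u$ is a factor of $w$; $u\sqsubseteq_k w$: $u$ occurs in $w$ at least $k$ times. A graph with words is a strongly connected finite directed graph (multiple edges and loops allowed) in which every edge $e$ carries a front word $F(e)$ and a back word $B(e)$, and every vertex either has in-degree $1$ and out-degree $>1$ (distributing vertex) or in-degree $>1$ and out-degree $1$ (collecting vertex). A path is a finite nonempty sequence of edges $v_1\dots v_n$ with each $v_{i+1}$ starting where $v_i$ ends; subpaths, prefixes, suffixes and $s_1\sqsubseteq_k s_2$ are defined via edge records (the word $v_1\dots v_n$ over the alphabet of edges). A path is symmetric if its first edge starts at a collecting vertex and its last edge ends at a distributing vertex. For $s=v_1\dots v_n$, $F(s)$ is the concatenation, in order, of the front words of $v_1$ and of all $v_i$ ($i\ge2$) starting at a distributing vertex; $B(s)$ is the concatenation, in order, of the back words of all $v_i$ ($i\le n-1$) ending at a collecting vertex and of $v_n$. A Rauzy scheme for $W$ is a graph with words such that: (1) it has more than one edge; (2) front words of edges leaving a common distributing vertex have pairwise distinct first letters, and back words of edges entering a common collecting vertex have pairwise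 distinct last letters; (3) $F(s)=B(s)$ for every symmetric path $s$; (4) for symmetric paths $s_1,s_2$ and $k\ge1$, $F(s_1)\sqsubseteq_k F(s_2)$ implies $s_1\sqsubseteq_k s_2$; (5) all words on edges are factors of $W$; (6) every factor of $W$ is a factor of $F(s)$ for some symmetric path $s$; (7) for every edge $e$ there is a factor $u_e$ of $W$ such that every symmetric path $s$ with $u_e\sqsubseteq F(s)$ passes through $e$. A symmetric path $s$ is admissible if $F(s)\sqsubseteq W$. *)

(* Defs.v *)
From mathcomp Require Import all_boot.
Set Implicit Arguments. Unset Strict Implicit. Unset Printing Implicit Defensive.

Section Words.
Variable A : eqType.

Definition occurs_at (u : seq A) (W : nat -> A) (i : nat) : Prop :=
  mkseq (fun j => W (i + j)) (size u) = u.

Definition factor_inf (u : seq A) (W : nat -> A) : Prop :=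
  exists i, occurs_at u W i.

Definition recurrent (W : nat -> A) : Prop :=
  forall u, factor_inf u W -> forall N, exists i, N <= i /\ occurs_at u W i.
End Words.

(* number of occurrences of u in the finite word w (over any eqType);
   u ⊑_k w  iff  k <= occ u w,  and  u ⊑ w  iff  infix u w *)
Definition occ (T : eqType) (u w : seq T) : nat :=
  count (fun i => take (size u) (drop i w) == u) (iota 0 (size w - size u).+1).

Record graph_words (A : Type) := GraphWords {
  gV : finType;
  gE : finType;               (* edges (multiple edges / loops allowed) *)
  gsrc : gE -> gV;
  gtgt : gE -> gV;
  gfront : gE -> seq A;
  gback : gE -> seq A }.

Section Graph.
Variable A : eqType.
Variable G : graph_words A.

Definition indeg (v : gV G) : nat := #|[pred e | gtgt e == v]|.
Definition outdeg (v : gV G) : nat := #|[pred e | gsrc e == v]|.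
Definition distributing (v : gV G) : bool := (indeg v == 1) && (1 < outdeg v).
Definition collecting (v : gV G) : bool := (1 < indeg v) && (outdeg v == 1).

Definition adj : rel (gV G) := fun x y => [exists e, (gsrc e == x) && (gtgt e == y)].
Definition strongly_connected : Prop := forall x y, connect adj x y.

Definition is_graph_with_words : Prop :=
  strongly_connected /\ forall v, distributing v || collecting v.

Definition is_path (s : seq (gE G)) : Prop :=
  s <> [::] /\ sorted (fun e1 e2 => gtgt e1 == gsrc e2) s.

Definition symmetric (s : seq (gE G)) : Prop :=
  is_path s /\
  (match s with [::] => False
   | e :: s' => collecting (gsrc e) /\ distributing (gtgt (last e s')) end).

Definition Fw (s : seq (gE G)) : seq A :=
  match s with
  | [::] => [::]
  | e :: s' => gfront e ++ flatten [seq gfront e' | e' <- s' & distributing (gsrc e')]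
  end.

Definition Bw (s : seq (gE G)) : seq A :=
  match s with
  | [::] => [::]
  | e :: s' => flatten [seq gback e' | e' <- belast e s' & collecting (gtgt e')]
               ++ gback (last e s')
  end.

Definition rauzy_scheme (W : nat -> A) : Prop :=
  is_graph_with_words /\
  (* (1) *) 1 < #|gE G| /\
  (* (2) *) (forall e1 e2 : gE G, e1 != e2 -> gsrc e1 = gsrc e2 -> distributing (gsrc e1) ->
               exists a1 a2 w1 w2, gfront e1 = a1 :: w1 /\ gfront e2 = a2 :: w2 /\ a1 <> a2) /\
            (forall e1 e2 : gE G, e1 != e2 -> gtgt e1 = gtgt e2 -> collecting (gtgt e1) ->
               exists a1 a2 w1 w2, gback e1 = rcons w1 a1 /\ gback e2 = rcons w2 a2 /\ a1 <> a2) /\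
  (* (3) *) (forall s, symmetric s -> Fw s = Bw s) /\
  (* (4) *) (forall s1 s2 k, symmetric s1 -> symmetric s2 -> 1 <= k ->
               k <= occ (Fw s1) (Fw s2) -> k <= occ s1 s2) /\
  (* (5) *) (forall e : gE G, factor_inf (gfront e) W /\ factor_inf (gback e) W) /\
  (* (6) *) (forall u, factor_inf u W -> exists s, symmetric s /\ infix u (Fw s)) /\
  (* (7) *) (forall e : gE G, exists ue, factor_inf ue W /\
               forall s, symmetric s -> infix ue (Fw s) -> e \in s).

Definition admissible (W : nat -> A) (s : seq (gE G)) : Prop :=
  symmetric s /\ factor_inf (Fw s) W.
End Graph.

(* Main.v *)
Require Import Defs.
From mathcomp Require Import all_boot zify.
Set Implicit Arguments. Unset Strict Implicit. Unset Printing Implicit Defensive.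

Section Aux.
Variable A : eqType.

Lemma occP (W : nat -> A) u i :
  occurs_at u W i <-> forall j, j < size u -> nth (W 0) u j = W (i + j).
Proof.
split.
- by rewrite /occurs_at => H j Hj; rewrite -H nth_mkseq.
- move=> H; rewrite /occurs_at; apply: (@eq_from_nth _ (W 0)); rewrite size_mkseq // => j Hj.
  by rewrite nth_mkseq // H.
Qed.

Lemma occ_sub (W : nat -> A) a v b i :
  occurs_at (a ++ v ++ b) W i -> occurs_at v W (i + size a).
Proof.
move/occP=> H; apply/occP => j Hj.
have := H (size a + j); rewrite nth_cat.
have -> : (size a + j < size a) = false by rewrite ltnNge leq_addr.
rewrite addKn nth_cat Hj addnA.
apply; rewrite !size_cat ltn_add2l; exact: ltn_addr.
Qed.

Lemma occ_ext_r (W : nat -> A) v i M :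
  occurs_at v W i -> occurs_at (v ++ mkseq (fun j => W (i + size v + j)) M) W i.
Proof.
move/occP=> H; apply/occP => j; rewrite size_cat size_mkseq nth_cat => Hj2.
case: ltnP => Hj; first by apply: H.
rewrite nth_mkseq; last by rewrite ltn_subLR.
by rewrite -addnA subnKC.
Qed.

Lemma occ_ext_l (W : nat -> A) v i M :
  occurs_at v W i -> M <= i ->
  occurs_at (mkseq (fun j => W (i - M + j)) M ++ v) W (i - M).
Proof.
move/occP=> H HM; apply/occP => j; rewrite size_cat size_mkseq nth_cat size_mkseq => Hj2.
case: ltnP => Hj; first by rewrite nth_mkseq.
rewrite H; last by rewrite ltn_subLR.
congr W; lia.
Qed.

Lemma prefix_le (a b c : seq A) :
  prefix a c -> prefix b c -> size a <= size b -> prefix a b.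
Proof.
rewrite !prefixE => /eqP Ha /eqP Hb Hs; rewrite -Hb take_takel //.
by rewrite Ha.
Qed.

Lemma suffix_le (a b c : seq A) :
  suffix a c -> suffix b c -> size a <= size b -> suffix a b.
Proof.
move=> /suffixP [x Hx] /suffixP [y Hy] Hs; apply/suffixP.
have Hsz : size y <= size x.
  have := congr1 size Hx; rewrite Hy !size_cat; lia.
exists (drop (size y) x).
move: Hx; rewrite Hy -{1}(cat_take_drop (size y) x) -catA => /eqP.
rewrite eqseq_cat; last by rewrite size_takel.
by case/andP => _ /eqP.
Qed.
End Aux.
Section Gr.
Variable A : eqType.
Variable G : graph_words A.
Local Notation E := (gE G).
Definition relE : rel E := fun e1 e2 => gtgt e1 == gsrc e2.

Definition Rf (s : seq E) : seq A :=
  flatten [seq gfront e' | e' <- s & distributing (gsrc e')].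
Definition Xb (s : seq E) : seq A :=
  flatten [seq gback e' | e' <- s & collecting (gtgt e')].

Lemma Rf_cat s t : Rf (s ++ t) = Rf s ++ Rf t.
Proof. by rewrite /Rf filter_cat map_cat flatten_cat. Qed.
Lemma Xb_cat s t : Xb (s ++ t) = Xb s ++ Xb t.
Proof. by rewrite /Xb filter_cat map_cat flatten_cat. Qed.
Lemma Rf_cons e q : Rf (e :: q) = (if distributing (gsrc e) then gfront e else [::]) ++ Rf q.
Proof. by rewrite /Rf /=; case: ifP. Qed.
Lemma Xb_rcons d e : Xb (rcons d e) = Xb d ++ (if collecting (gtgt e) then gback e else [::]).
Proof. by rewrite -cats1 Xb_cat /Xb /=; case: ifP => //=; rewrite cats0. Qed.

Lemma Fw_cat s t : s != [::] -> Fw (s ++ t) = Fw s ++ Rf t.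
Proof. by case: s => // x s _ /=; rewrite -/(Rf (s ++ t)) Rf_cat catA. Qed.

Lemma Bw_cat p e l0 : Bw (p ++ e :: l0) = Xb p ++ Bw (e :: l0).
Proof.
case: p => [|e1 p0] //=.
rewrite belast_cat last_cat /= -cat_rcons -lastI.
by rewrite -/(Xb _) Xb_cat -catA.
Qed.

Lemma dist_ncoll (v : gV G) : distributing v -> ~~ collecting v.
Proof. by rewrite /distributing /collecting => /andP [/eqP -> _]. Qed.

Lemma symE (s : seq E) (x : E) : Defs.symmetric s <->
  [/\ s != [::], sorted relE s, collecting (gsrc (head x s)) & distributing (gtgt (last x s))].
Proof.
case: s => [|e s] /=; first by split => [[[]]|[]].
split; first by case=> [[_ H1] [H2 H3]].
by case=> _ H1 H2 H3; split.
Qed.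

Lemma sym_split (p l q : seq E) : Defs.symmetric (p ++ l ++ q) -> Defs.symmetric l ->
  Defs.symmetric (p ++ l) /\ Defs.symmetric (l ++ q).
Proof.
case: l => [|e l0]; first by move=> _ [[]].
move=> Hs Hl; have x := e.
move/(symE _ e): Hs => [_ Hs Hs1 Hs2].
move/(symE _ e): Hl => [_ Hl Hl1 Hl2].
have [Hpl Hlq] := cat_sorted2 Hs.
rewrite catA in Hs; have [Hpl' _] := cat_sorted2 Hs.
split; apply/(symE _ e); split => //.
- by case: p {Hs Hpl Hpl' Hs2 Hs1}.
- by case: p Hs1 {Hs Hpl Hpl' Hs2} => [|e1 p0].
- by rewrite last_cat.
- by move: Hs2; rewrite last_cat.
Qed.

Lemma sorted_mid (s1 s2 : seq E) z e :
  sorted relE (s1 ++ z :: e :: s2) -> gtgt z == gsrc e.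
Proof. by case/cat_sorted2 => _ /= /andP []. Qed.

Section Canon.
Hypothesis H3 : forall s : seq E, Defs.symmetric s -> Fw s = Bw s.
Hypothesis H4 : forall (s1 s2 : seq E) k, Defs.symmetric s1 -> Defs.symmetric s2 -> 1 <= k ->
               k <= occ (Fw s1) (Fw s2) -> k <= occ s1 s2.
Hypothesis Hback : forall e : E, collecting (gtgt e) -> 0 < size (gback e).

Lemma dec (s p l q : seq E) : Defs.symmetric s -> Defs.symmetric l -> s = p ++ l ++ q ->
  Fw s = Xb p ++ Fw l ++ Rf q.
Proof.
move=> Hs Hl Es; rewrite Es in Hs.
have [Hpl _] := sym_split Hs Hl.
case: l Hl Es Hs Hpl => [[[]]|e l0] // Hl Es Hs Hpl.
rewrite Es catA Fw_cat; last by case: p {Es Hs Hpl}.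
by rewrite H3 // Bw_cat -H3 // catA.
Qed.

Lemma canon (s l : seq E) a b : Defs.symmetric s -> Defs.symmetric l ->
  Fw s = a ++ Fw l ++ b -> exists p q, [/\ s = p ++ l ++ q, Xb p = a & Rf q = b].
Proof.
move=> Hs Hl Hfs.
have [e0 [l0 El]] : exists e0 l0, l = e0 :: l0.
  by case: l Hl {Hfs} => [[[]]|x l0] _ //; exists x, l0.
pose PosF := [seq i <- iota 0 (size (Fw s) - size (Fw l)).+1 |
                 take (size (Fw l)) (drop i (Fw s)) == Fw l].
pose PosL := [seq i <- iota 0 (size s - size l).+1 | take (size l) (drop i s) == l].
pose f i := size (Xb (take i s)).
have occL i : i \in PosL -> s = take i s ++ l ++ drop (i + size l) s.
  rewrite mem_filter => /andP [/eqP Ht _].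
  by rewrite -{1}(cat_take_drop i s) -{1}(cat_take_drop (size l) (drop i s)) Ht drop_drop addnC.
have Hsub : {subset map f PosL <= PosF}.
  move=> n /mapP [i Hi ->]; have Hd := dec Hs Hl (occL i Hi).
  rewrite mem_filter mem_iota /= Hd /f drop_size_cat // take_size_cat // eqxx /=.
  rewrite !size_cat; lia.
have Hinc i j : i \in PosL -> j \in PosL -> i < j -> f i < f j.
  move=> Hi Hj Hij.
  have Hjs : j < size s.
    move: Hj; rewrite mem_filter mem_iota => /andP [_ /andP [_]].
    rewrite El /=; move: (size l0) => k; lia.
  have Htj : take j s = take i s ++ drop i (take j s).
    by rewrite -{1}(cat_take_drop i (take j s)) take_takel // ltnW.
  have Hd : size (drop i (take j s)) = j - i by rewrite size_drop size_takel // ltnW.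
  have [d' [z Hdz]] : exists d' z, drop i (take j s) = rcons d' z.
    case E: (drop i (take j s)) Hd => [|y ys] Hd; first by move: Hd => /= /esym; lia.
    by exists (belast y ys), (last y ys); rewrite lastI.
  rewrite Hdz in Htj.
  have Hs' := occL j Hj; rewrite Htj El -catA cat_rcons catA in Hs'.
  have Hsort : sorted relE s by case/(symE _ e0): Hs.
  rewrite Hs' in Hsort; have Hze := sorted_mid Hsort.
  have Hc : collecting (gtgt z).
    by rewrite (eqP Hze); case/(symE _ e0): Hl => _ _; rewrite El.
  rewrite /f Htj Xb_cat size_cat Xb_rcons Hc size_cat.
  have := Hback Hc; lia.
have Huniq : uniq (map f PosL).
  rewrite map_inj_in_uniq ?filter_uniq ?iota_uniq // => i j Hi Hj Hij.
  case: (ltngtP i j) => // [/(Hinc _ _ Hi Hj)|/(Hinc _ _ Hj Hi)]; by rewrite Hij ltnn.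
have HaF : size a \in PosF.
  rewrite mem_filter mem_iota /= Hfs drop_size_cat // take_size_cat // eqxx /=.
  rewrite !size_cat; lia.
have Hsize : size PosF <= size (map f PosL).
  rewrite size_map !size_filter; apply: H4 => //.
  by rewrite -has_count; apply/hasP; exists (size a); move: HaF; rewrite mem_filter; case/andP.
have [_ Heq] := uniq_min_size Huniq Hsub Hsize.
move: HaF; rewrite -Heq => /mapP [i Hi Hfi].
exists (take i s), (drop (i + size l) s); split; first exact: occL.
- have := dec Hs Hl (occL i Hi); rewrite Hfs => /eqP; rewrite eqseq_cat; last by rewrite Hfi.
  by case/andP => /eqP.
- have := dec Hs Hl (occL i Hi); rewrite Hfs => /eqP; rewrite eqseq_cat; last by rewrite Hfi.
  by case/andP => _; rewrite eqseq_cat // => /andP [_ /eqP].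
Qed.
End Canon.

Section Cut.
Variable M : nat.

Lemma cut1 (HM : forall e : E, size (gfront e) <= M) (q : seq E) (x : E) n :
  path relE x q -> distributing (gtgt (last x q)) -> n <= size (Rf q) ->
  exists k, [/\ distributing (gtgt (last x (take k q))), n <= size (Rf (take k q)),
              size (Rf (take k q)) <= n + M & (n = 0 -> Rf (take k q) = [::])].
Proof.
elim: q x n => [|e q IH] x n.
  move=> _ Hd Hn; exists 0; rewrite take0 /=; split => //; move: Hn => /=; lia.
move=> /= /andP [Hxe Hp] Hd Hn.
have He := HM e.
case: (boolP (distributing (gtgt x))) => Hx.
- case: (posnP n) => [-> | Hn0].
    by exists 0; rewrite take0 /=; split.
  move: Hn; rewrite Rf_cons -(eqP Hxe) Hx size_cat => Hn.
  case: (leqP n (size (gfront e))) => Hle.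
  + have [k [K1 K2 K3 K4]] := IH e 0 Hp Hd (leq0n _).
    exists k.+1; rewrite /= Rf_cons -(eqP Hxe) Hx K4 // cats0; split => //; lia.
  + have [k [K1 K2 K3 K4]] := IH e (n - size (gfront e)) Hp Hd ltac:(lia).
    exists k.+1; rewrite /= Rf_cons -(eqP Hxe) Hx size_cat; split => //; lia.
- move: Hn; rewrite Rf_cons -(eqP Hxe) (negbTE Hx) /= => Hn.
  have [k [K1 K2 K3 K4]] := IH e n Hp Hd Hn.
  by exists k.+1; rewrite /= Rf_cons -(eqP Hxe) (negbTE Hx).
Qed.

Lemma sorted_rcons2 (p : seq E) e y :
  sorted relE (rcons (rcons p e) y) -> sorted relE (rcons p e) /\ relE e y.
Proof.
case: p => [|a p] /=; first by case/andP.
by rewrite rcons_path last_rcons => /andP [-> ->].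
Qed.

Lemma head_rcons (p : seq E) e y : head y (rcons p e) = head e p.
Proof. by case: p. Qed.

Lemma cut2 (HM : forall e : E, size (gback e) <= M) (p : seq E) (y : E) n :
  sorted relE (rcons p y) -> collecting (gsrc (head y p)) -> n <= size (Xb p) ->
  exists k, [/\ k <= size p, collecting (gsrc (head y (drop k p))), n <= size (Xb (drop k p)),
              size (Xb (drop k p)) <= n + M & (n = 0 -> Xb (drop k p) = [::])].
Proof.
elim/last_ind: p y n => [|p e IH] y n.
  move=> _ Hd Hn; exists 0; rewrite drop0 /=; split => //; move: Hn => /=; lia.
move=> /sorted_rcons2 [Hp Hey] Hc Hn.
rewrite head_rcons in Hc.
have He := HM e.
have Hsz : size (rcons p e) = (size p).+1 by rewrite size_rcons.
case: (boolP (collecting (gsrc y))) => Hy.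
- case: (posnP n) => [-> | Hn0].
    by exists (size p).+1; rewrite -Hsz drop_size; split.
  move: Hn; rewrite Xb_rcons (eqP Hey) Hy size_cat => Hn.
  case: (leqP n (size (gback e))) => Hle.
  + have [k [K0 K1 K2 K3 K4]] := IH e 0 Hp Hc (leq0n _).
    exists k; rewrite drop_rcons // head_rcons Xb_rcons (eqP Hey) Hy K4 //.
    rewrite Hsz /=; split => //; try lia; move=> H0; exfalso; lia.
  + have [k [K0 K1 K2 K3 K4]] := IH e (n - size (gback e)) Hp Hc ltac:(lia).
    exists k; rewrite drop_rcons // head_rcons Xb_rcons (eqP Hey) Hy size_cat Hsz.
    split => //; try lia; move=> H0; exfalso; lia.
- move: Hn; rewrite Xb_rcons (eqP Hey) (negbTE Hy) cats0 => Hn.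
  have [k [K0 K1 K2 K3 K4]] := IH e n Hp Hc Hn.
  exists k; rewrite drop_rcons // head_rcons Xb_rcons (eqP Hey) (negbTE Hy) cats0 Hsz.
  by split => //; lia.
Qed.
End Cut.
End Gr.

Theorem lemma3p5 (A : eqType) (W : nat -> A) (G : graph_words A)
    (l : seq (gE G)) (u1 : seq A) :
  recurrent W -> rauzy_scheme G W -> admissible W l ->
  (factor_inf (Fw l ++ u1) W ->
     exists l' : seq (gE G), admissible W l' /\ prefix l l' /\ prefix (Fw l ++ u1) (Fw l')) /\
  (factor_inf (u1 ++ Fw l) W ->
     exists l' : seq (gE G), admissible W l' /\ suffix l l' /\ suffix (u1 ++ Fw l) (Fw l')).
Proof.
move=> Hrec [HG [H1 [H2a [H2b [H3 [H4 [H5 [H6 H7]]]]]]]] [Hl HlW].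
have Hback : forall e : gE G, collecting (gtgt e) -> 0 < size (gback e).
  move=> e Hc.
  case: (pickP (fun e2 => (gtgt e2 == gtgt e) && (e2 != e))) => [e2 /andP [He2 Hne] | Hnone].
    have [a1 [a2 [w1 [w2 [Hb1 _]]]]] := H2b e e2 ltac:(by rewrite eq_sym) (esym (eqP He2)) Hc.
    by rewrite Hb1 size_rcons.
  exfalso; move: Hc; rewrite /collecting /indeg => /andP [Hc _].
  have : #|[pred e2 | gtgt e2 == gtgt e]| <= #|pred1 e|.
    apply: subset_leq_card; apply/subsetP => e2; rewrite !inE => He2.
    by move: (Hnone e2) => /=; rewrite He2 /= => /negbFE.
  rewrite card1; lia.
pose M1 := \max_(e : gE G) size (gfront e).
pose M2 := \max_(e : gE G) size (gback e).
have HM1 : forall e : gE G, size (gfront e) <= M1 by move=> e; apply: leq_bigmax.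
have HM2 : forall e : gE G, size (gback e) <= M2 by move=> e; apply: leq_bigmax.
have [e0 [l0 El]] : exists e0 l0, l = e0 :: l0.
  by case: l Hl {HlW} => [[[]]|x l0] _ //; exists x, l0.
split.
- move=> [i Hi].
  pose z := mkseq (fun j => W (i + size (Fw l ++ u1) + j)) M1.
  have Hocc := occ_ext_r M1 Hi.
  have [s [Hs Hinf]] := H6 _ (ex_intro _ i Hocc).
  move/infixP: Hinf => [a [b Hfs]].
  have [p [q [Es Hxp Hrq]]] := canon H3 H4 Hback (a := a) (b := u1 ++ z ++ b) Hs Hl
    ltac:(by rewrite Hfs -!catA).
  rewrite Es in Hs; have [_ Hlq] := sym_split Hs Hl.
  move/(symE _ e0): Hlq => [_ Hsq _ Hdq].
  rewrite El /= cat_path in Hsq; case/andP: Hsq => Hsl0 Hpq.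
  rewrite El /= last_cat in Hdq.
  have Hn : size u1 <= size (Rf q) by rewrite Hrq size_cat leq_addr.
  have [k [K1 K2 K3 _]] := cut1 HM1 Hpq Hdq Hn.
  have HRq : Rf q = Rf (take k q) ++ Rf (drop k q) by rewrite -Rf_cat cat_take_drop.
  have Hp1 : prefix u1 (Rf (take k q)).
    apply: (@prefix_le _ _ _ (Rf q)) => //; first by rewrite Hrq; apply/prefixP; exists (z ++ b).
    by rewrite HRq; apply/prefixP; eexists.
  have Hp2 : prefix (Rf (take k q)) (u1 ++ z).
    apply: (@prefix_le _ _ _ (Rf q)).
    + by rewrite HRq; apply/prefixP; eexists.
    + by rewrite Hrq catA; apply/prefixP; eexists.
    + by rewrite size_cat size_mkseq.
  exists (l ++ take k q); split; [split|split].
  + apply/(symE _ e0); split.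
    * by rewrite El.
    * by rewrite El /= cat_path Hsl0 take_path.
    * by case/(symE _ e0): Hl => _ _ Hc _; move: Hc; rewrite El.
    * by rewrite El /= last_cat.
  + rewrite Fw_cat ?El //; rewrite -El.
    move/prefixP: Hp2 => [r Hr].
    exists i; have := @occ_sub _ W [::] (Fw l ++ Rf (take k q)) r i; rewrite addn0 /=; apply; rewrite -catA -Hr catA.
    exact: Hocc.
  + by apply/prefixP; eexists.
  + rewrite Fw_cat ?El // -El; move/prefixP: Hp1 => [r ->].
    by apply/prefixP; exists r; rewrite catA.
- move=> Hf.
  have [i [HiN Hi]] := Hrec _ Hf M2.
  pose z := mkseq (fun j => W (i - M2 + j)) M2.
  have Hocc := occ_ext_l Hi HiN.
  have [s [Hs Hinf]] := H6 _ (ex_intro _ _ Hocc).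
  move/infixP: Hinf => [a [b Hfs]].
  have [p [q [Es Hxp Hrq]]] := canon H3 H4 Hback (a := a ++ z ++ u1) (b := b) Hs Hl
    ltac:(by rewrite Hfs -!catA).
  rewrite Es in Hs; have [Hpl _] := sym_split Hs Hl.
  move/(symE _ e0): Hpl => [_ Hsp Hcp _].
  have Hsr : sorted (@relE _ G) (rcons p e0).
    by move: Hsp; rewrite El -cat_rcons => /cat_sorted2 [].
  have Hch : collecting (gsrc (head e0 p)) by move: Hcp; rewrite El; case: (p).
  have Hn : size u1 <= size (Xb p) by rewrite Hxp !size_cat; lia.
  have [k [K0 K1 K2 K3 _]] := cut2 HM2 Hsr Hch Hn.
  have HXp : Xb p = Xb (take k p) ++ Xb (drop k p) by rewrite -Xb_cat cat_take_drop.
  have Hs1 : suffix u1 (Xb (drop k p)).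
    apply: (@suffix_le _ _ _ (Xb p)) => //; first by rewrite Hxp; apply/suffixP; exists (a ++ z); rewrite -!catA.
    by rewrite HXp; apply/suffixP; eexists.
  have Hs2 : suffix (Xb (drop k p)) (z ++ u1).
    apply: (@suffix_le _ _ _ (Xb p)).
    + by rewrite HXp; apply/suffixP; eexists.
    + by rewrite Hxp; apply/suffixP; exists a.
    + by rewrite size_cat size_mkseq addnC.
  have Hsym : Defs.symmetric (drop k p ++ l).
    apply/(symE _ e0); split.
    * by rewrite El; case: (drop k p).
    * by move: Hsp; rewrite -{1}(cat_take_drop k p) -catA => /cat_sorted2 [].
    * by rewrite El; move: K1; case: (drop k p).
    * by rewrite El last_cat; move/(symE _ e0): Hl => [_ _ _]; rewrite El.
  have HF : Fw (drop k p ++ l) = Xb (drop k p) ++ Fw l.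
    by rewrite H3 // El Bw_cat -El -H3.
  exists (drop k p ++ l); split; [split|split] => //.
  + rewrite HF; move/suffixP: Hs2 => [r Hr].
    exists (i - M2 + size r); apply: (@occ_sub _ _ r _ [::]).
    by rewrite cats0 catA -Hr -catA.
  + by apply/suffixP; eexists.
  + rewrite HF; move/suffixP: Hs1 => [r ->].
    by apply/suffixP; exists r; rewrite catA.
Qed.
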